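(* Let $G$ be a connected signed digraph with $n$ vertices that is not a signed cycle. Then there exists a degree-bounded finite dynamical system $f$ on $G$ such that $f^{n+1}$ is a constant map.
   Context: A finite dynamical system (FDS) with $n$ components is a map $f=(f_1,\dots,f_n):X\to X$ where $X=X_1\times\cdots\times X_n$ and each $X_i$ is a nonempty finite interval of integers; $f^k$ denotes the $k$-fold composition of $f$ with itself. A signed digraph is a pair $G=(V,E)$ with $E\subseteq V\times V\times\{+,-\}$; $(j,i,s)\in E$ is an arc from $j$ to $i$ of sign $s$ (loops are allowed, and $G$ may have both a positive and a negative arc from $j$ to $i$, called parallel arcs). Write $G^+_i=\{j:(j,i,+)\in E\}$, $G^-_i=\{j:(j,i,-)\in E\}$, $G_i=G^+_i\cup G^-_i$. The in-degree of $i$ is $d^{\mathrm{in}}_G(i)=|G^+_i|+|G^-_i|$ and the out-degree $d^{\mathrm{out}}_G(i)$ is the number of positive arcs leaving $i$ plus the number of negative arcs leaving $i$. $G$ is connected if its underlying undirected graph is connected. The underlying unsigned digraph $|G|$ has vertex set $V$ and an arc from $j$ to $i$ iff $j\in G_i$. $G$ is a signed cycle if $|G|$ is a directed cycle (through all vertices, each exactly once; a single vertex with a loop counts) and $G$ has no parallel arcs. The interaction graph of an FDS $f$ with $n$ components is the signed digraph on vertex set $\{1,\dots,n\}$ having a positive (resp. negative) arc from $j$ to $i$ iff there is $x\in X$ with $x_j<\max(X_j)$ such that $f_i(x+e_j)-f_i(x)$ is positive (resp. negative), where $e_j$ is the $j$-th unit vector. $f$ is an FDS on $G$ if $G$ is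 its interaction graph. $f$ is degree-bounded if, with $G$ its interaction graph, for every $i$: $|X_i|=2$ if $d^{\mathrm{out}}_G(i)=0<d^{\mathrm{in}}_G(i)$, and $|X_i|\le d^{\mathrm{out}}_G(i)+1$ otherwise. *)

(* Defs.v *)
From mathcomp Require Import all_boot all_order all_algebra.
Set Implicit Arguments. Unset Strict Implicit. Unset Printing Implicit Defensive.
Import Order.TTheory GRing.Theory Num.Theory.
Local Open Scope ring_scope.

(* A signed digraph on vertex set 'I_n is given by two relations:
   pos j i  <=> there is a positive arc from j to i,
   neg j i  <=> there is a negative arc from j to i. *)

Definition arcG n (pos neg : rel 'I_n) : rel 'I_n := fun j i => pos j i || neg j i.

Definition indeg n (pos neg : rel 'I_n) (i : 'I_n) : nat :=
  (#|[set j | pos j i]| + #|[set j | neg j i]|)%N.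

Definition outdeg n (pos neg : rel 'I_n) (i : 'I_n) : nat :=
  (#|[set k | pos i k]| + #|[set k | neg i k]|)%N.

Definition sconnected n (pos neg : rel 'I_n) : Prop :=
  forall u v : 'I_n, connect (fun a b => arcG pos neg a b || arcG pos neg b a) u v.

Definition signed_cycle n (pos neg : rel 'I_n) : Prop :=
  (exists s : seq 'I_n,
      [/\ (0 < size s)%N, uniq s, (forall v, v \in s) &
          forall j i, arcG pos neg j i = (i == next s j)])
  /\ (forall j i, ~~ (pos j i && neg j i)).

Definition inX n (a b : 'I_n -> int) (x : {ffun 'I_n -> int}) : Prop :=
  forall i, a i <= x i <= b i.

Definition unit_add n (x : {ffun 'I_n -> int}) (j : 'I_n) : {ffun 'I_n -> int} :=
  [ffun k => x k + (k == j)%:R].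

Definition FDS_on n (a b : 'I_n -> int)
    (f : {ffun 'I_n -> int} -> {ffun 'I_n -> int}) (pos neg : rel 'I_n) : Prop :=
  (forall i, a i <= b i) /\
  (forall x, inX a b x -> inX a b (f x)) /\
  (forall j i, pos j i <->
      exists x, [/\ inX a b x, x j < b j & f (unit_add x j) i - f x i > 0]) /\
  (forall j i, neg j i <->
      exists x, [/\ inX a b x, x j < b j & f (unit_add x j) i - f x i < 0]).

Definition degree_bounded n (a b : 'I_n -> int) (pos neg : rel 'I_n) : Prop :=
  forall i : 'I_n,
    if (outdeg pos neg i == 0%N) && (0 < indeg pos neg i)%N
    then b i - a i + 1 = 2
    else b i - a i + 1 <= (outdeg pos neg i)%:Z + 1.

Definition constant_on n (a b : 'I_n -> int)
    (g : {ffun 'I_n -> int} -> {ffun 'I_n -> int}) : Prop :=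
  forall x y, inX a b x -> inX a b y -> g x = g y.

(* Main.v *)
Require Import Defs.
From mathcomp Require Import all_boot all_order all_algebra zify.
Set Implicit Arguments. Unset Strict Implicit. Unset Printing Implicit Defensive.

Definition paral n (pos neg : rel 'I_n) j i := pos j i && neg j i.
Definition parv n (pos neg : rel 'I_n) j := [exists k, paral pos neg j k].
Definition isB n (pos neg : rel 'I_n) j :=
  (outdeg pos neg j == 1)%N && (0 < indeg pos neg j)%N.

Lemma outdeg_ge n (pos neg : rel 'I_n) j i :
  arcG pos neg j i -> (0 < outdeg pos neg j)%N.
Proof.
rewrite /arcG /outdeg => /orP[] h.
  by rewrite addn_gt0; apply/orP; left; apply/card_gt0P; exists i; rewrite inE.
by rewrite addn_gt0; apply/orP; right; apply/card_gt0P; exists i; rewrite inE.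
Qed.

Lemma indeg_ge n (pos neg : rel 'I_n) j i :
  arcG pos neg j i -> (0 < indeg pos neg i)%N.
Proof.
rewrite /arcG /indeg => /orP[] h.
  by rewrite addn_gt0; apply/orP; left; apply/card_gt0P; exists j; rewrite inE.
by rewrite addn_gt0; apply/orP; right; apply/card_gt0P; exists j; rewrite inE.
Qed.

Lemma paral_out n (pos neg : rel 'I_n) j i :
  paral pos neg j i -> (2 <= outdeg pos neg j)%N.
Proof.
move=> /andP[hp hn]; rewrite /outdeg.
have h1 : (0 < #|[set k | pos j k]|)%N by apply/card_gt0P; exists i; rewrite inE.
have h2 : (0 < #|[set k | neg j k]|)%N by apply/card_gt0P; exists i; rewrite inE.
lia.
Qed.

Lemma parv_out n (pos neg : rel 'I_n) j i :
  parv pos neg j -> arcG pos neg j i -> ~~ paral pos neg j i ->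
  (3 <= outdeg pos neg j)%N.
Proof.
move=> /existsP[k /andP[hp hn]] ha hnp; rewrite /outdeg.
have hki : k != i by apply/eqP=> e; subst k; rewrite /paral hp hn in hnp.
have h1 : (0 < #|[set k | pos j k]|)%N by apply/card_gt0P; exists k; rewrite inE.
have h2 : (0 < #|[set k | neg j k]|)%N by apply/card_gt0P; exists k; rewrite inE.
case/orP: ha => h.
  have : (#|[set k; i]| <= #|[set k | pos j k]|)%N.
    by apply: subset_leq_card; apply/subsetP=> x; rewrite !inE => /orP[]/eqP->.
  rewrite cards2 hki /=. move=> hh; exact: (leq_add hh h2).
have : (#|[set k; i]| <= #|[set k | neg j k]|)%N.
  by apply: subset_leq_card; apply/subsetP=> x; rewrite !inE => /orP[]/eqP->.
rewrite cards2 hki /= => hh; exact: (leq_add h1 hh).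
Qed.

Lemma out1_uniq n (pos neg : rel 'I_n) j i k :
  outdeg pos neg j = 1%N -> arcG pos neg j i -> arcG pos neg j k ->
  i = k /\ ~~ paral pos neg j i.
Proof.
move=> h1 hi hk.
have hnp : ~~ paral pos neg j i.
  apply/negP=> hp; have := paral_out hp; rewrite h1 //.
split => //.
move: hi hk h1; rewrite /arcG /outdeg.
set P := [set k | pos j k]; set N := [set k | neg j k].
have cardle1 (S : {set 'I_n}) : #|S| = 1%N -> forall a b, a \in S -> b \in S -> a = b.
  move=> h a b; move/eqP/cards1P: h => [c ->]; rewrite !inE => /eqP-> /eqP-> //.
have inP a : pos j a -> a \in P by rewrite inE.
have inN a : neg j a -> a \in N by rewrite inE.
case/orP=> [/inP|/inN] ha; case/orP=> [/inP|/inN] hb h.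
- have hP : (0 < #|P|)%N by apply/card_gt0P; exists i.
  apply: (cardle1 P _ i k ha hb); apply/eqP; rewrite eqn_leq hP andbT -h leq_addr //.
- have hP : (0 < #|P|)%N by apply/card_gt0P; exists i.
  have hN : (0 < #|N|)%N by apply/card_gt0P; exists k.
  by move: h; rewrite -(prednK hP) -(prednK hN) addSn addnS.
- have hP : (0 < #|P|)%N by apply/card_gt0P; exists k.
  have hN : (0 < #|N|)%N by apply/card_gt0P; exists i.
  by move: h; rewrite -(prednK hP) -(prednK hN) addSn addnS.
- have hN : (0 < #|N|)%N by apply/card_gt0P; exists i.
  apply: (cardle1 N _ i k ha hb); apply/eqP; rewrite eqn_leq hN andbT -h leq_addl //.
Qed.

Lemma out_pos_arc n (pos neg : rel 'I_n) j :
  (0 < outdeg pos neg j)%N -> exists i, arcG pos neg j i.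
Proof.
rewrite /outdeg addn_gt0 => /orP[]/card_gt0P[i]; rewrite inE => h;
  by exists i; rewrite /arcG h ?orbT.
Qed.

Lemma in_pos_arc n (pos neg : rel 'I_n) i :
  (0 < indeg pos neg i)%N -> exists j, arcG pos neg j i.
Proof.
rewrite /indeg addn_gt0 => /orP[]/card_gt0P[j]; rewrite inE => h;
  by exists j; rewrite /arcG h ?orbT.
Qed.

Lemma noclosed n (pos neg : rel 'I_n) :
  sconnected pos neg -> ~ signed_cycle pos neg ->
  forall U : {set 'I_n}, U != set0 -> (forall u, u \in U -> isB pos neg u) ->
  exists u j, [/\ u \in U, j \notin U & arcG pos neg j u].
Proof.
move=> hconn hnc U hU hB.
case: (boolP [exists u, exists j, (u \in U) && (j \notin U) && arcG pos neg j u]).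
  by move=> /existsP[u /existsP[j /andP[/andP[h1 h2] h3]]]; exists u, j.
move=> hno; exfalso.
have hc : forall u j, u \in U -> arcG pos neg j u -> j \in U.
  move=> u j hu ha; apply/negPn/negP=> hj; move/negP: hno; apply.
  by apply/existsP; exists u; apply/existsP; exists j; rewrite hu hj ha.
pose succ (j : 'I_n) := odflt j [pick i | arcG pos neg j i].
have hsucc : forall j, (0 < outdeg pos neg j)%N -> arcG pos neg j (succ j).
  move=> j /out_pos_arc [i hi]; rewrite /succ; case: pickP => //= h.
  by rewrite h in hi.
have out1 : forall u, u \in U -> outdeg pos neg u = 1%N.
  by move=> u /hB /andP[/eqP].
have hsuccU : forall u i, u \in U -> arcG pos neg u i -> i = succ u.
  move=> u i hu ha; have := out1 u hu => ho.
  have := hsucc u; rewrite ho => /(_ isT) hs.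
  by case: (out1_uniq ho ha hs).
have hsurj : U \subset succ @: U.
  apply/subsetP=> u hu; have := hB u hu => /andP[_] /in_pos_arc [j hj].
  have hjU := hc u j hu hj.
  by apply/imsetP; exists j => //; apply: hsuccU.
have hcard : #|succ @: U| = #|U|.
  apply/eqP; rewrite eqn_leq leq_imset_card /=; exact: subset_leq_card.
have himg : succ @: U = U.
  apply/eqP; rewrite eq_sym eqEcard hsurj /=; rewrite hcard //.
have hinj : {in U &, injective succ} by apply/imset_injP; rewrite hcard.
have houtU : forall u i, u \in U -> arcG pos neg u i -> i \in U.
  move=> u i hu ha; rewrite (hsuccU u i hu ha) -himg; exact: imset_f.
pose e := fun a b => arcG pos neg a b || arcG pos neg b a.
have clU : closed e U.
  move=> x y /orP[] h.
    apply/idP/idP => [hx|hy]; [exact: houtU h| exact: hc h].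
  apply/idP/idP => [hx|hy]; [exact: hc h| exact: houtU h].
have [u0 hu0] : exists u0, u0 \in U by apply/set0Pn.
have allU : forall v, v \in U.
  move=> v; rewrite -(closed_connect clU (hconn u0 v)) //.
have injs : injective succ by move=> x y; apply: hinj; apply: allU.
apply: hnc; split.
  exists (orbit succ u0); split.
  - by rewrite size_orbit.
  - exact: orbit_uniq.
  - move=> v; rewrite -fconnect_orbit.
    apply: (connect_sub _ (hconn u0 v)) => x y /orP[] h.
      rewrite (hsuccU x y (allU x) h); exact: fconnect1.
    rewrite (fconnect_sym injs) (hsuccU y x (allU y) h); exact: fconnect1.
  - move=> j i.
    have hn : next (orbit succ u0) j = succ j.
      have hj : j \in orbit succ u0.
        rewrite -fconnect_orbit.
        apply: (connect_sub _ (hconn u0 j)) => x y /orP[] h.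
          rewrite (hsuccU x y (allU x) h); exact: fconnect1.
        rewrite (fconnect_sym injs) (hsuccU y x (allU y) h); exact: fconnect1.
      by have := next_cycle (cycle_orbit injs u0) hj => /eqP.
    rewrite hn; apply/idP/idP => [h|/eqP->].
      by rewrite (hsuccU j i (allU j) h).
    by apply: hsucc; rewrite out1.
move=> j i; apply/negP => /andP[hp hn].
have ha : arcG pos neg j i by rewrite /arcG hp.
have [_ ] := out1_uniq (out1 j (allU j)) ha ha.
by rewrite /paral hp hn.
Qed.

Definition Inv n (pos neg : rel 'I_n) (S : {set 'I_n}) (p : 'I_n -> 'I_n)
  (l : 'I_n -> nat) :=
  [/\ (forall i, ~~ isB pos neg i -> i \in S),
      (forall i, i \in S -> isB pos neg i ->
         [/\ arcG pos neg (p i) i, p i \in S & (l (p i) < l i)%N]) &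
      (forall i, i \in S -> (l i < #|S|)%N)].

Lemma grow n (pos neg : rel 'I_n) :
  sconnected pos neg -> ~ signed_cycle pos neg ->
  forall k S p l, #|~: S| = k -> Inv pos neg S p l ->
  exists p l, Inv pos neg setT p l.
Proof.
move=> hc hnc; elim=> [|k IH] S p l hk hI.
  have eS : S = setT.
    apply/setP=> x; rewrite inE; apply/negPn/negP=> hx.
    have : (0 < #|~: S|)%N by apply/card_gt0P; exists x; rewrite inE.
    by rewrite hk.
  by rewrite eS in hI; exists p, l.
have hU : ~: S != set0 by rewrite -card_gt0 hk.
case: hI => h1 h2 h3.
have hB : forall u, u \in ~: S -> isB pos neg u.
  move=> u; rewrite inE => hu; apply/negPn/negP => /h1; by rewrite (negbTE hu).
have [u [j [hu hj ha]]] := noclosed hc hnc hU hB.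
rewrite inE negbK in hj. rewrite inE in hu.
have hju : j != u by apply/eqP=> e; subst; rewrite hj in hu.
apply: (IH (u |: S) (fun i => if i == u then j else p i)
           (fun i => if i == u then #|S| else l i)).
  have : #|~: S| = #|~: (u |: S)|.+1.
    rewrite (cardsD1 u (~: S)) inE hu add1n; congr _.+1; apply: eq_card => x.
    by rewrite !inE negb_or andbC.
  by rewrite hk => -[].
have hcard : #|u |: S| = #|S|.+1 by rewrite cardsU1 hu.
split.
- by move=> i /h1 hi; rewrite inE hi orbT.
- move=> i hiS' hiB.
  case: (eqVneq i u) => [eiu|hiu].
    subst i; rewrite (negbTE hju); split => //.
      by rewrite inE hj orbT.
    exact: h3 hj.
  have hiS : i \in S by move: hiS'; rewrite !inE ?(negbTE hiu).
  have [a b c] := h2 i hiS hiB.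
  have hpu : p i != u by apply/eqP=> e; rewrite -e b in hu.
  by rewrite ?(negbTE hiu) (negbTE hpu); split => //; rewrite inE b orbT.
- move=> i; rewrite hcard; case: (eqVneq i u) => [_ _|hiu hiS] //.
  apply: ltnW; apply: h3; move: hiS; rewrite !inE ?(negbTE hiu) //.
Qed.

Lemma parlvl n (pos neg : rel 'I_n) : (0 < n)%N ->
  sconnected pos neg -> ~ signed_cycle pos neg ->
  exists (par : 'I_n -> 'I_n) (lvl : 'I_n -> nat),
    [/\ (forall i, (0 < indeg pos neg i)%N -> arcG pos neg (par i) i),
        (forall i, isB pos neg i -> (lvl (par i) < lvl i)%N) &
        (forall i, (lvl i < n)%N)].
Proof.
move=> hn hc hnc.
pose S0 := [set i | ~~ isB pos neg i].
have hS0 : (0 < #|S0|)%N.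
  rewrite card_gt0; apply/negP=> /eqP h0.
  have hT : [set: 'I_n] != set0.
    by apply/set0Pn; exists (Ordinal hn); rewrite inE.
  have hB : forall u, u \in [set: 'I_n] -> isB pos neg u.
    move=> u _; apply/negPn/negP=> hu.
    have : u \in S0 by rewrite inE.
    by rewrite h0 inE.
  have [u [j [_ hj _]]] := noclosed hc hnc hT hB.
  by rewrite inE in hj.
have hI : Inv pos neg S0 id (fun _ => 0%N).
  split.
  - by move=> i hi; rewrite inE.
  - by move=> i; rewrite inE => /negbTE ->.
  - by move=> i _.
have [p [l [h1 h2 h3]]] := grow hc hnc (erefl _) hI.
exists (fun i => if isB pos neg i then p i else odflt i [pick j | arcG pos neg j i]), l.
split.
- move=> i hi; case: ifP => hb.
    by have [] := h2 i (in_setT i) hb.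
  have [j hj] := in_pos_arc hi.
  case: pickP => //= h; by rewrite h in hj.
- by move=> i hb; rewrite hb; have [] := h2 i (in_setT i) hb.
- by move=> i; have := h3 i (in_setT i); rewrite cardsT card_ord.
Qed.
Import Order.TTheory GRing.Theory Num.Theory.
Local Open Scope ring_scope.

Section Cons.
Variables (n : nat) (pos neg : rel 'I_n) (par : 'I_n -> 'I_n) (lvl : 'I_n -> nat).
Hypothesis hpar : forall i, (0 < indeg pos neg i)%N -> arcG pos neg (par i) i.
Hypothesis hlvl : forall i, isB pos neg i -> (lvl (par i) < lvl i)%N.
Hypothesis hlt : forall i, (lvl i < n)%N.

Definition omega i : int :=
  if indeg pos neg i == 0%N then 0
  else if (2 <= outdeg pos neg i)%N then (if parv pos neg i then 2 else 1) else 1.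
Definition th j : int :=
  if (0 < indeg pos neg j)%N && (2 <= outdeg pos neg j)%N
  then (if parv pos neg j then 2 else 1) else 0.
Definition bnd i : int :=
  if outdeg pos neg i == 0%N then (if (0 < indeg pos neg i)%N then 1 else 0)
  else (outdeg pos neg i)%:Z.
Fixpoint Ofuel (k : nat) (j : 'I_n) : bool :=
  if k is k'.+1 then
    (if isB pos neg j then
       (if paral pos neg (par j) j then true else Ofuel k' (par j) == pos (par j) j)
     else true)
  else true.
Definition Oo j := Ofuel n j.
Definition up i := if paral pos neg (par i) i then true else (Oo (par i) == pos (par i) i).
Definition cc (j i : 'I_n) (v : int) : bool :=
  if arcG pos neg j i then
    (if paral pos neg j i then v == 1 else ((th j < v) == (up i == pos j i)))
  else true.
Definition gate i (x : {ffun 'I_n -> int}) := [forall j, cc j i (x j)].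
Definition hi i := if up i then omega i else 0.
Definition lo i := if up i then 0 else omega i.
Definition ff (x : {ffun 'I_n -> int}) : {ffun 'I_n -> int} :=
  [ffun i => if gate i x then hi i else lo i].
Definition act j (v : int) :=
  (0 < outdeg pos neg j)%N && (((th j < v) == Oo j) || (parv pos neg j && (v == 1))).

Lemma omega_bnd i : 0 <= omega i <= bnd i.
Proof.
rewrite /omega /bnd.
case: (boolP (indeg pos neg i == 0%N)) => hin.
  by case: ifP => _ //; case: ifP.
have hin' : (0 < indeg pos neg i)%N by rewrite lt0n.
case: ifP => ho.
  have -> : (outdeg pos neg i == 0%N) = false by apply/negbTE; rewrite -lt0n; lia.
  by case: ifP => _; apply/andP; split => //; rewrite lez_nat //; lia.
case: ifP => h0; first by rewrite hin'.
have -> : outdeg pos neg i = 1%N by move/negbT: ho; rewrite -ltnNge; move/negbT: h0; lia.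
by [].
Qed.

Lemma th_bnd j i : arcG pos neg j i -> ~~ paral pos neg j i -> 0 <= th j < bnd j.
Proof.
move=> ha hnp; have ho := outdeg_ge ha.
rewrite /th /bnd.
have -> : (outdeg pos neg j == 0%N) = false by apply/negbTE; rewrite -lt0n.
case: ifP => h; last by rewrite /= ltz_nat.
case/andP: h => _ h2; case: ifP => hp.
  have := parv_out hp ha hnp; rewrite /= ltz_nat; lia.
by rewrite /= ltz_nat; lia.
Qed.

Lemma paral_bnd j i : paral pos neg j i -> 2 <= bnd j.
Proof.
move=> hp; have := paral_out hp => h2; rewrite /bnd.
have -> : (outdeg pos neg j == 0%N) = false by apply/negbTE; rewrite -lt0n; lia.
by rewrite lez_nat.
Qed.

Lemma bnd_ge0 i : 0 <= bnd i.
Proof. rewrite /bnd; case: ifP => _; first by case: ifP. by []. Qed.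

Lemma B_noparv j : isB pos neg j -> ~~ parv pos neg j.
Proof.
move=> /andP[/eqP h1 _]; apply/negP => /existsP[k hk].
by have := paral_out hk; rewrite h1.
Qed.

Lemma Ofuel_stable k k' j : (lvl j < k)%N -> (lvl j < k')%N -> Ofuel k j = Ofuel k' j.
Proof.
elim: k k' j => [|k IH] [|k'] j //= h1 h2.
case: ifP => hb //; case: ifP => _ //.
have hl := hlvl hb.
by rewrite (IH k' (par j)) //; lia.
Qed.

Lemma Oo_B j : isB pos neg j -> Oo j = up j.
Proof.
move=> hb; rewrite /Oo /up.
have hl := hlvl hb; have hl2 := hlt (par j); have hl3 := hlt j.
rewrite (@Ofuel_stable n (lvl j).+1 j) //= hb; case: ifP => _ //.
by rewrite (@Ofuel_stable (lvl j) n (par j)).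
Qed.

Lemma Oo_nB j : ~~ isB pos neg j -> Oo j = true.
Proof.
move=> hb; rewrite /Oo; have hl3 := hlt j.
by rewrite (@Ofuel_stable n (lvl j).+1 j) //= (negbTE hb).
Qed.

Definition UP j i := exists v, [/\ 0 <= v, v < bnd j, ~~ cc j i v & cc j i (v + 1)].
Definition DN j i := exists v, [/\ 0 <= v, v < bnd j, cc j i v & ~~ cc j i (v + 1)].

Lemma UPDN_par j i : arcG pos neg j i -> paral pos neg j i -> UP j i /\ DN j i.
Proof.
move=> ha hp; have hb := paral_bnd hp; rewrite /UP /DN /cc ha hp.
split.
  by exists 0; split => //; apply: (lt_le_trans _ hb).
by exists 1; split => //; apply: (lt_le_trans _ hb).
Qed.

Lemma UPDN_single j i : arcG pos neg j i -> ~~ paral pos neg j i ->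
  (UP j i <-> (up i == pos j i)) /\ (DN j i <-> ~~ (up i == pos j i)).
Proof.
move=> ha hp; have /andP[h0 hb] := th_bnd ha hp.
rewrite /UP /DN /cc ha (negbTE hp).
case: (up i == pos j i); split; split => //.
- move=> _; exists (th j); split => //; first by rewrite ltxx.
  by rewrite ltzD1 lexx.
- case=> v [_ _ a b]; move: a b; rewrite !eqb_id => a.
  by rewrite ltzD1 (ltW a).
- case=> v [_ _ a b]; move: a b; rewrite !eqbF_neg negbK => a.
  by rewrite ltzD1 (ltW a).
- move=> _; exists (th j); split => //; first by rewrite ltxx.
  by rewrite ltzD1 lexx.
Qed.

Lemma UPDN_none j i : ~~ arcG pos neg j i -> ~ UP j i /\ ~ DN j i.
Proof.
move=> ha; rewrite /UP /DN /cc (negbTE ha).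
by split => -[v [_ _ a b]].
Qed.

Lemma arc_char j i : (0 < indeg pos neg i)%N ->
  (pos j i <-> (if up i then UP j i else DN j i)) /\
  (neg j i <-> (if up i then DN j i else UP j i)).
Proof.
move=> hi.
case: (boolP (arcG pos neg j i)) => ha.
  case: (boolP (paral pos neg j i)) => hp.
    have [hU hD] := UPDN_par ha hp.
    move: hp => /andP[-> ->].
    by case: (up i).
  have [hU hD] := UPDN_single ha hp.
  have hn : neg j i = ~~ pos j i.
    move: ha hp; rewrite /arcG /paral.
    by case: (pos j i); case: (neg j i).
  rewrite hn.
  case: (up i) hU hD; case: (pos j i) => /= hU hD; split; split => //;
    try (by move=> h; apply/hU); try (by move=> h; apply/hD);
    try (by move/hU); by move/hD.
have [hU hD] := UPDN_none ha.
have [-> ->] : pos j i = false /\ neg j i = false.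
  by move: ha; rewrite /arcG negb_or => /andP[/negbTE -> /negbTE ->].
by case: (up i); split; split.
Qed.

Lemma gate_split i j (x : {ffun 'I_n -> int}) :
  gate i x = cc j i (x j) && [forall k, (k != j) ==> cc k i (x k)].
Proof.
rewrite /gate; apply/forallP/andP => [h|[h1 /forallP h2] k].
  by split => //; apply/forallP => k; apply/implyP.
by case: (eqVneq k j) => [->//|hk]; move/implyP: (h2 k); apply.
Qed.

Lemma gate_ua i j (x : {ffun 'I_n -> int}) :
  gate i (unit_add x j) = cc j i (x j + 1) && [forall k, (k != j) ==> cc k i (x k)].
Proof.
rewrite (gate_split i j) /unit_add ffunE eqxx; congr andb.
apply: eq_forallb => k; case: (eqVneq k j) => //= hk.
by rewrite ffunE (negbTE hk) addr0.
Qed.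

Lemma sat i k : exists w, (0 <= w <= bnd k) && cc k i w.
Proof.
rewrite /cc; case: (boolP (arcG pos neg k i)) => ha.
  case: (boolP (paral pos neg k i)) => hp.
    by exists 1; rewrite eqxx andbT; have := paral_bnd hp; apply: le_trans.
  have /andP[h0 hb] := th_bnd ha hp.
  case: (up i == pos k i).
    exists (th k + 1); rewrite ltzD1 lexx andbT; apply/andP; split.
      by apply: addr_ge0.
    by rewrite lezD1.
  by exists 0; rewrite lexx bnd_ge0 /=; rewrite ltNge h0.
by exists 0; rewrite lexx bnd_ge0.
Qed.

Lemma omega_pos i : (0 < indeg pos neg i)%N -> 0 < omega i.
Proof.
move=> h; rewrite /omega.
have -> : (indeg pos neg i == 0%N) = false by apply/negbTE; rewrite -lt0n.
by case: ifP => _ //; case: ifP.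
Qed.

Lemma omega0 i : indeg pos neg i = 0%N -> omega i = 0.
Proof. by rewrite /omega => ->. Qed.

Lemma ffE x i : ff x i = if gate i x then hi i else lo i.
Proof. by rewrite ffunE. Qed.

Lemma witness j i v :
  0 <= v -> v < bnd j ->
  exists x, [/\ inX (fun _ => 0) bnd x, x j < bnd j,
     gate i x = cc j i v & gate i (unit_add x j) = cc j i (v + 1)].
Proof.
move=> h0 hb.
pose w k := xchoose (sat i k).
have hw k : (0 <= w k <= bnd k) && cc k i (w k) := xchooseP (sat i k).
pose x := [ffun k => if k == j then v else w k].
have hR : [forall k, (k != j) ==> cc k i (x k)].
  apply/forallP => k; apply/implyP => hk; rewrite ffunE (negbTE hk).
  by case/andP: (hw k).
exists x; split.
- move=> k; rewrite ffunE; case: eqP => [->|_]; first by rewrite h0 ltW.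
  by case/andP: (hw k).
- by rewrite ffunE eqxx.
- by rewrite (gate_split i j) hR andbT ffunE eqxx.
- by rewrite gate_ua hR andbT ffunE eqxx.
Qed.

Lemma diff_sign (u a b : bool) (w : int) : 0 < w ->
  let h := if u then w else 0 in let l := if u then 0 else w in
  ((0 < (if a then h else l) - (if b then h else l)) = if u then a && ~~ b else ~~ a && b) /\
  (((if a then h else l) - (if b then h else l) < 0) = if u then ~~ a && b else a && ~~ b).
Proof.
move=> hw /=; case: u; case: a; case: b => /=; rewrite ?subrr ?ltxx ?subr0 ?sub0r
  ?oppr_lt0 ?oppr_gt0 ?hw //; by rewrite ltNge ltW.
Qed.

Lemma ff_arc j i :
  (pos j i <-> exists x, [/\ inX (fun _ => 0) bnd x, x j < bnd j &
      ff (unit_add x j) i - ff x i > 0]) /\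
  (neg j i <-> exists x, [/\ inX (fun _ => 0) bnd x, x j < bnd j &
      ff (unit_add x j) i - ff x i < 0]).
Proof.
case: (posnP (indeg pos neg i)) => hin.
  have hpn : pos j i = false /\ neg j i = false.
    split; apply/negP => h; have := @indeg_ge n pos neg j i; rewrite /arcG h ?orbT hin;
      by move/(_ isT).
  have hD x : ff (unit_add x j) i - ff x i = 0.
    by rewrite !ffE /hi /lo omega0 //; case: (up i); rewrite !if_same subrr.
  case: hpn => -> ->; split; split => //; case=> x [_ _]; by rewrite hD ltxx.
have [hp hn] := arc_char j hin.
have hom := omega_pos hin.
have key x : (0 < ff (unit_add x j) i - ff x i =
      if up i then gate i (unit_add x j) && ~~ gate i x
      else ~~ gate i (unit_add x j) && gate i x) /\
   (ff (unit_add x j) i - ff x i < 0 =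
      if up i then ~~ gate i (unit_add x j) && gate i x
      else gate i (unit_add x j) && ~~ gate i x).
  by rewrite !ffE /hi /lo; apply: diff_sign.
have back x : inX (fun _ => 0) bnd x -> x j < bnd j ->
   (gate i (unit_add x j) && ~~ gate i x -> UP j i) /\
   (~~ gate i (unit_add x j) && gate i x -> DN j i).
  move=> hx hxj; have /andP[hx0 _] := hx j.
  rewrite gate_ua (gate_split i j); split.
    by case/andP=> /andP[a r]; rewrite r andbT => b; exists (x j).
  by case/andP=> b /andP[a r]; move: b; rewrite r andbT => b; exists (x j).
split.
- rewrite hp; split.
    case hu : (up i) => -[v [h0 hb a b]];
      have [x [hx hxj g1 g2]] := @witness j i v h0 hb;
      exists x; split => //; rewrite (key x).1 hu g1 g2 ?(negbTE a) ?b //.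
  case=> x [hx hxj]; rewrite (key x).1; have [b1 b2] := back x hx hxj.
  by case: (up i) => /= h; [apply: b1 | apply: b2].
- rewrite hn; split.
    case hu : (up i) => -[v [h0 hb a b]];
      have [x [hx hxj g1 g2]] := @witness j i v h0 hb;
      exists x; split => //; rewrite (key x).2 hu g1 g2 ?(negbTE a) ?(negbTE b) ?a ?b //.
  case=> x [hx hxj]; rewrite (key x).2; have [b1 b2] := back x hx hxj.
  by case: (up i) => /= h; [apply: b2 | apply: b1].
Qed.

Lemma cc_par_act i v : (0 < indeg pos neg i)%N -> cc (par i) i v -> act (par i) v.
Proof.
move=> hi; have ha := hpar hi; rewrite /cc ha /act (outdeg_ge ha) /=.
case: ifP => hp.
  move/eqP => ->; rewrite eqxx andbT.
  have -> : parv pos neg (par i) by apply/existsP; exists i.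
  by rewrite orbT.
rewrite /up hp.
by case: (Oo (par i)); case: (pos (par i) i); case: (th (par i) < v).
Qed.

Lemma th_ge0 j : 0 <= th j.
Proof. by rewrite /th; case: ifP => _ //; case: ifP. Qed.

Lemma act_nB0 j : ~~ isB pos neg j -> act j 0 = false.
Proof.
move=> hb; rewrite /act Oo_nB // eqb_id.
have h := th_ge0 j.
by rewrite ltNge h /=; case: (parv _ _); rewrite ?andbF.

Qed.

Lemma act_om j : ~~ isB pos neg j -> act j (omega j) = false.
Proof.
move=> hb; rewrite /act Oo_nB // eqb_id.
case: (posnP (outdeg pos neg j)) => ho; first by [].
rewrite /omega /th.
case: (posnP (indeg pos neg j)) => hi.
  by rewrite /=; case: (parv _ _).
rewrite /=.
case: ifP => h2.
  rewrite ltxx /=; case: ifP => //.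
have : outdeg pos neg j = 1%N by move/negbT: h2; rewrite -ltnNge; lia.
by move=> e; move: hb; rewrite /isB e hi.
Qed.

Lemma act_ff x j : act j (ff x j) -> isB pos neg j && act (par j) (x (par j)).
Proof.
rewrite ffE; case hb : (isB pos neg j).
  have hin : (0 < indeg pos neg j)%N by case/andP: hb.
  case hg : (gate j x) => /=.
    by move=> _; apply: cc_par_act => //; move: hg; rewrite (gate_split j (par j)) => /andP[].
  have ho : outdeg pos neg j = 1%N by case/andP: hb => /eqP.
  rewrite /act /lo Oo_B //.
  have -> : omega j = 1.
    by rewrite /omega ho; have -> : (indeg pos neg j == 0%N) = false by apply/negbTE; rewrite -lt0n.
  have -> : th j = 0 by rewrite /th ho andbF.
  rewrite (negbTE (B_noparv hb)) /= orbF.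
  by case: (up j); rewrite ?ltxx ?ltr01 /= ?andbF.
move/negbT: hb => hb.
by rewrite /hi /lo; case: (gate j x); case: (up j); rewrite ?act_nB0 ?act_om.
Qed.

Lemma act_iter t x j : act j (iter t.+1 ff x j) -> (t < lvl j)%N.
Proof.
elim: t j => [|t IH] j.
  by move=> /act_ff /andP[hb _]; have := hlvl hb; lia.
rewrite iterS => /act_ff /andP[hb /IH h]; have := hlvl hb; lia.
Qed.

Lemma nilp x : (0 < n)%N -> iter n.+1 ff x = [ffun i => lo i].
Proof.
move=> hn; apply/ffunP => i; rewrite iterS ffE ffunE.
case: (posnP (indeg pos neg i)) => hin.
  by rewrite /hi /lo omega0 //; case: (up i); rewrite !if_same.
case hg : (gate i _) => //.
exfalso.
have hc : cc (par i) i (iter n ff x (par i)).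
  by move: hg; rewrite (gate_split i (par i)) => /andP[].
have := cc_par_act hin hc.
have := @act_iter n.-1 x (par i); rewrite prednK // => h /h.
by have := hlt (par i); lia.
Qed.

Lemma main_cons : (0 < n)%N ->
  exists (a b : 'I_n -> int) (f : {ffun 'I_n -> int} -> {ffun 'I_n -> int}),
    [/\ FDS_on a b f pos neg, degree_bounded a b pos neg &
        constant_on a b (iter n.+1 f)].
Proof.
move=> hn; exists (fun _ => 0), bnd, ff; split.
- split; first by move=> i; apply: bnd_ge0.
  split.
    move=> x _ i; rewrite ffE /hi /lo; have /andP[a b] := omega_bnd i.
    by case: (gate i x); case: (up i); rewrite ?lexx ?bnd_ge0 ?a ?b.
  by split => j i; have [h1 h2] := ff_arc j i.
- move=> i; rewrite subr0 /bnd.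
  case: (boolP (outdeg pos neg i == 0%N)) => ho /=.
    by rewrite (eqP ho) /=; case: ifP => h; rewrite h.
  by rewrite lexx.
- by move=> x y _ _; rewrite !nilp.
Qed.

End Cons.

Theorem theorem3 (n : nat) (pos neg : rel 'I_n) :
  sconnected pos neg -> ~ signed_cycle pos neg ->
  exists (a b : 'I_n -> int) (f : {ffun 'I_n -> int} -> {ffun 'I_n -> int}),
    [/\ FDS_on a b f pos neg, degree_bounded a b pos neg &
        constant_on a b (iter n.+1 f)].
Proof.
move=> hc hnc.
case: (posnP n) => hn.
  subst n.
  exists (fun _ => 0%R), (fun _ => 0%R), id; split.
  - split; first by case.
    split; first by [].
    by split; case.
  - by case.
  - move=> x y _ _; apply/ffunP; case.
    by [].
have [par [lvl [h1 h2 h3]]] := parlvl hn hc hnc.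
exact: (main_cons h1 h2 h3 hn).
Qed.
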